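(* If an $n$-Brinkhuis triple pair exists, then $s\ge 2^{1/(n-1)}$.
   Context: Let $\Sigma=\{0,1,2\}$. A word over $\Sigma$ is square-free if it cannot be written as $xyyz$ with $y$ nonempty. $\mathcal{A}(n)$ is the set of square-free words of length $n$ over $\Sigma$, $a(n)=|\mathcal{A}(n)|$, and $s=\lim_{n\to\infty}a(n)^{1/n}$ (this limit exists). An $n$-Brinkhuis triple pair consists of three sets $\mathcal{B}^{(0)},\mathcal{B}^{(1)},\mathcal{B}^{(2)}\subset\mathcal{A}(n)$. Each $\mathcal{B}^{(i)}=\{U^{(i)},V^{(i)}\}$ has two distinct square-free words of length $n$. The defining condition: for every square-free word $w_1w_2w_3\in\mathcal{A}(3)$ and every choice $W_j\in\mathcal{B}^{(w_j)}$ for $j=1,2,3$, the concatenation $W_1W_2W_3$ (of length $3n$) is square-free. *)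

(* Defs.v *)
From HB Require Import structures.
From mathcomp Require Import all_boot all_order all_algebra.
From mathcomp Require Import all_classical all_reals all_analysis.
Set Implicit Arguments. Unset Strict Implicit. Unset Printing Implicit Defensive.

Definition word := seq 'I_3.

Definition squarefree (w : word) : Prop :=
  ~ exists x y z : word, y <> [::] /\ w = x ++ y ++ y ++ z.

Definition sqfree_count (n : nat) : nat :=
  #|[set w : n.-tuple 'I_3 | `[< squarefree (tval w) >]]|.

(* An n-Brinkhuis triple pair: B i = (U^(i), V^(i)). *)
Definition brinkhuis_triple_pair (n : nat) (B : 'I_3 -> word * word) : Prop :=
  (forall i : 'I_3,
      size (B i).1 = n /\ size (B i).2 = n /\
      squarefree (B i).1 /\ squarefree (B i).2 /\ (B i).1 <> (B i).2) /\
  (forall w1 w2 w3 : 'I_3, squarefree [:: w1; w2; w3] ->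
     forall W1 W2 W3 : word,
       (W1 = (B w1).1 \/ W1 = (B w1).2) ->
       (W2 = (B w2).1 \/ W2 = (B w2).2) ->
       (W3 = (B w3).1 \/ W3 = (B w3).2) ->
       squarefree (W1 ++ W2 ++ W3)).

(* Main.v *)
Require Import Defs.
From HB Require Import structures.
From mathcomp Require Import all_boot all_order all_algebra.
From mathcomp Require Import all_classical all_reals all_analysis.
From mathcomp Require Import zify.
Import Order.TTheory GRing.Theory Num.Theory.
Import numFieldNormedType.Exports.

Set Implicit Arguments. Unset Strict Implicit.

Definition hassq (w : word) (i L : nat) : Prop :=
  [/\ 0 < L, i + 2 * L <= size w &
      forall k, k < L -> nth ord0 w (i + k) = nth ord0 w (i + L + k)]%N.

Lemma sqfP (w : word) : squarefree w <-> ~ exists i L, hassq w i L.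
Proof.
split.
- move=> sf [i [L [L0 hi hk]]]; apply: sf.
  exists (take i w), (take L (drop i w)), (drop (i + 2 * L) w).
  split.
    move=> e; move: (congr1 size e); rewrite size_takel /=; first lia.
    rewrite size_drop; lia.
  have s1 : size (take i w) = i by rewrite size_takel //; lia.
  have s2 : size (take L (drop i w)) = L by rewrite size_takel // size_drop; lia.
  apply: (@eq_from_nth _ ord0).
    rewrite !size_cat s1 s2 !size_drop; lia.
  move=> k _.
  rewrite !nth_cat s1 s2.
  case: (ltnP k i) => ki; first by rewrite nth_take.
  case: (ltnP (k - i) L) => kiL.
    by rewrite nth_take // nth_drop; congr nth; lia.
  case: (ltnP (k - i - L) L) => kiL2.
    rewrite nth_take // nth_drop.
    have := hk (k - i - L) kiL2.
    have -> : i + L + (k - i - L) = k by lia.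
    by move=> ->.
  rewrite nth_drop; congr nth; lia.
- move=> nsq [x [y [z [yn e]]]]; apply: nsq.
  exists (size x), (size y); split.
  + by case: y yn e => //.
  + rewrite e !size_cat; lia.
  + move=> k kL; rewrite e !nth_cat.
    have -> : (size x + k < size x) = false by lia.
    have -> : size x + k - size x = k by lia.
    rewrite kL.
    have -> : (size x + size y + k < size x) = false by lia.
    have -> : size x + size y + k - size x = size y + k by lia.
    have -> : (size y + k < size y) = false by lia.
    have -> : size y + k - size y = k by lia.
    by rewrite kL.
Qed.

Lemma hassq_suf (x y : word) i L :
  hassq (x ++ y) i L -> (size x <= i)%N -> hassq y (i - size x) L.
Proof.
move=> [L0 hi hk] xi; split => //.
  by move: hi; rewrite size_cat; lia.
move=> k kL; have := hk k kL; rewrite !nth_cat.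
have -> : (i + k < size x) = false by lia.
have -> : (i + L + k < size x) = false by lia.
have -> : i + k - size x = i - size x + k by lia.
by have -> : i + L + k - size x = i - size x + L + k by lia.
Qed.

Lemma hassq_pre (x y : word) i L :
  hassq (x ++ y) i L -> (i + 2 * L <= size x)%N -> hassq x i L.
Proof.
move=> [L0 hi hk] xi; split => //.
move=> k kL; have := hk k kL; rewrite !nth_cat.
have -> : (i + k < size x) by lia.
by have -> : (i + L + k < size x) by lia.
Qed.

Lemma sqf_mid (x y z : word) : squarefree (x ++ y ++ z) -> squarefree y.
Proof.
move=> sf [a [b [c [bn e]]]]; apply: sf.
exists (x ++ a), b, (c ++ z); split => //.
by rewrite e -!catA.
Qed.

Lemma sqf_pre (x y : word) : squarefree (x ++ y) -> squarefree x.
Proof. by move=> sf; apply: (@sqf_mid [::] x y). Qed.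

Lemma sqf_suf (x y : word) : squarefree (x ++ y) -> squarefree y.
Proof. by move=> sf; apply: (@sqf_mid x y [::]); rewrite cats0. Qed.

Lemma sqf_adj (w : word) j : squarefree w -> (j.+1 < size w)%N ->
  nth ord0 w j != nth ord0 w j.+1.
Proof.
move=> /sqfP sf jw; apply/eqP => e; apply: sf; exists j, 1%N; split => //.
  lia.
move=> k k1; have -> : k = 0%N by lia.
by rewrite !addn0 addn1.
Qed.

Lemma sqf3 (a b c : 'I_3) : a != b -> b != c -> squarefree [:: a; b; c].
Proof.
move=> ab bc; apply/sqfP => -[i [L [L0 hi hk]]].
move: hi => /= hi.
have L1 : L = 1%N by lia.
subst L; have := hk 0%N isT; rewrite !addn0.
case: i hi {hk} => [|[|i]] //= hi.
- by move=> e; move: ab; rewrite e eqxx.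
- by move=> e; move: bc; rewrite e eqxx.
- lia.
Qed.

Definition inB (B : 'I_3 -> word * word) a (X : word) :=
  X = (B a).1 \/ X = (B a).2.

Lemma other (b : 'I_3) : exists c : 'I_3, c != b.
Proof.
case: (eqVneq b ord0) => [->|h]; last by exists ord0; rewrite eq_sym.
exists (inord 1); apply/eqP => /(congr1 val); by rewrite /= inordK.
Qed.

Section BFacts.
Variables (n : nat) (B : 'I_3 -> word * word).
Hypothesis HB : brinkhuis_triple_pair n B.

Lemma Bsize a X : inB B a X -> size X = n.
Proof. by case: HB => h _ [->|->]; case: (h a) => [? [? _]]. Qed.

Lemma Bsf a X : inB B a X -> squarefree X.
Proof. by case: HB => h _ [->|->]; case: (h a) => [? [? [? [? _]]]]. Qed.

Lemma npos : (0 < n)%N.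
Proof.
case: HB => h _; case: (h ord0) => [s1 [s2 [_ [_ ne]]]].
case: n s1 s2 => // s1 s2; apply: False_ind; apply: ne.
by move/size0nil: s1 ->; move/size0nil: s2 ->.
Qed.

Lemma Btriple a b c U V W : a != b -> b != c -> inB B a U -> inB B b V ->
  inB B c W -> squarefree (U ++ V ++ W).
Proof. by move=> ab bc hU hV hW; case: HB => _ h; exact: (h a b c (@sqf3 a b c ab bc) U V W hU hV hW). Qed.

Lemma Bpair a b U V : a != b -> inB B a U -> inB B b V -> squarefree (U ++ V).
Proof.
move=> ab hU hV; have [c cb] := other b.
have bc : b != c by rewrite eq_sym.
have := @Btriple a b c U V (B c).1 ab bc hU hV (or_introl erefl).
by rewrite catA; apply: sqf_pre.
Qed.

Lemma Bdisj a b X : inB B a X -> inB B b X -> a = b.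
Proof.
move=> ha hb; apply/eqP; apply/negPn/negP => ab.
have /sqfP := @Bpair a b X X ab ha hb; apply; exists 0%N, n; split.
- exact: npos.
- by rewrite size_cat (Bsize ha); lia.
- move=> k kn; rewrite !nth_cat (Bsize ha) add0n kn.
  have -> : (n + k < n) = false by lia.
  by have -> : n + k - n = k by lia.
Qed.

End BFacts.

Lemma nth_flat n (Xs : seq word) k e :
  (forall j, j < size Xs -> size (nth [::] Xs j) = n)%N ->
  (k < size Xs)%N -> (e < n)%N ->
  nth ord0 (flatten Xs) (k * n + e) = nth ord0 (nth [::] Xs k) e.
Proof.
elim: Xs k => [|X Xs IH] k hs //= ks en.
have sX : size X = n by apply: (hs 0%N).
rewrite nth_cat sX; case: k ks => [|k] ks /=.
  by rewrite mul0n add0n en.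
have -> : (k.+1 * n + e < n) = false by rewrite mulSn; lia.
have -> : k.+1 * n + e - n = k * n + e by rewrite mulSn; lia.
apply: IH => //; move=> j jl; exact: (hs j.+1).
Qed.

Lemma size_flat n (Xs : seq word) :
  (forall j, j < size Xs -> size (nth [::] Xs j) = n)%N ->
  size (flatten Xs) = (size Xs * n)%N.
Proof.
elim: Xs => [|X Xs IH] hs //=.
rewrite size_cat (hs 0%N) // IH ?mulSn // => j jl; exact: (hs j.+1).
Qed.

Lemma lt_blk n k t e : (k < t)%N -> (e < n)%N -> (k * n + e < t * n)%N.
Proof.
move=> kt en; apply: (@leq_trans (k.+1 * n)); first by rewrite mulSn; lia.
by rewrite leq_mul2r kt orbT.
Qed.

Lemma blk_lt n k m e : (k * n + e < m * n)%N -> (k < m)%N.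
Proof.
move=> h; have : (k * n < m * n)%N by lia.
by rewrite ltn_mul2r => /andP[].
Qed.

Section Main.
Variables (n : nat) (B : 'I_3 -> word * word).
Hypothesis HB : brinkhuis_triple_pair n B.
Variables (w : word) (Xs : seq word).
Hypothesis Hs : size Xs = size w.
Hypothesis Hin : forall j, (j < size w)%N -> inB B (nth ord0 w j) (nth [::] Xs j).
Hypothesis Hw : squarefree w.

Lemma Xsz j : (j < size Xs)%N -> size (nth [::] Xs j) = n.
Proof. by move=> h; apply: (Bsize HB (Hin _)); rewrite -Hs. Qed.

Lemma sizeW : size (flatten Xs) = (size w * n)%N.
Proof. by rewrite (size_flat Xsz) Hs. Qed.

Lemma nthW k e : (k < size w)%N -> (e < n)%N ->
  nth ord0 (flatten Xs) (k * n + e) = nth ord0 (nth [::] Xs k) e.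
Proof. by move=> km en; apply: nth_flat => //; [exact: Xsz | rewrite Hs]. Qed.

Lemma sync a X p : inB B a X -> (p + n <= size w * n)%N ->
  (forall e, (e < n)%N -> nth ord0 (flatten Xs) (p + e) = nth ord0 X e) ->
  (p %% n = 0)%N.
Proof.
move=> hX pn hoc.
have n0 := npos HB.
have pe := divn_eq p n.
set g := (p %/ n)%N in pe; set r := (p %% n)%N in pe *.
have rn : (r < n)%N by rewrite ltn_mod.
case: (posnP r) => // r0.
have g1m : (g.+1 < size w)%N.
  apply: (@blk_lt n _ _ 0%N); rewrite mulSn; lia.
have gm : (g < size w)%N by lia.
have hXk : forall k, (k < n)%N -> nth ord0 X k =
   if (r + k < n)%N then nth ord0 (nth [::] Xs g) (r + k)
   else nth ord0 (nth [::] Xs g.+1) (r + k - n).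
  move=> k kn; rewrite -hoc //; case: ifP => rk.
    by rewrite -nthW // pe addnA.
  rewrite -nthW //; last lia.
  congr nth; rewrite mulSn; lia.
have ad := sqf_adj Hw g1m.
have hg := Hin gm; have hg1 := Hin g1m.
have sX := Bsize HB hX; have sg := Bsize HB hg; have sg1 := Bsize HB hg1.
exfalso; case: (eqVneq a (nth ord0 w g.+1)) => [ea|na].
- have na : nth ord0 w g != a by rewrite ea.
  have /sqfP := Bpair HB na hg hX; apply; exists r, (n - r)%N; split.
  + lia.
  + rewrite size_cat sg sX; lia.
  + move=> k kL; rewrite !nth_cat sg.
    have -> : (r + k < n)%N by lia.
    have -> : (r + (n - r) + k < n)%N = false by lia.
    have -> : (r + (n - r) + k - n = k)%N by lia.
    by rewrite hXk; [have -> : (r + k < n)%N by lia|lia].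
- have /sqfP := Bpair HB na hX hg1; apply; exists (n - r)%N, r; split.
  + lia.
  + rewrite size_cat sg1 sX; lia.
  + move=> k kL; rewrite !nth_cat sX.
    have -> : (n - r + k < n)%N by lia.
    have -> : (n - r + r + k < n)%N = false by lia.
    have -> : (n - r + r + k - n = k)%N by lia.
    rewrite hXk; last lia.
    have -> : (r + (n - r + k) < n)%N = false by lia.
    by have -> : (r + (n - r + k) - n = k)%N by lia.
Qed.


Lemma caseA i L : hassq (flatten Xs) i L -> (i + 2 * L <= 3 * n)%N -> False.
Proof.
move=> hq h3.
have hin : forall j, (j < size Xs)%N -> inB B (nth ord0 w j) (nth [::] Xs j).
  by move=> j; rewrite Hs; apply: Hin.
have ad : forall j, (j.+1 < size Xs)%N -> nth ord0 w j != nth ord0 w j.+1.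
  by move=> j; rewrite Hs; apply: sqf_adj.
case E : Xs hin ad hq => [|X0 [|X1 [|X2 rest]]] hin ad hq.
- by case: hq => /= ? ? _; lia.
- have h0 := hin 0%N isT; move: hq => /=; rewrite cats0 => hq.
  by move/sqfP: (Bsf HB h0); apply; exists i, L.
- have h0 := hin 0%N isT; have h1 := hin 1%N isT; have a01 := ad 0%N isT.
  move: hq => /=; rewrite cats0 => hq.
  by move/sqfP: (Bpair HB a01 h0 h1); apply; exists i, L.
- have h0 := hin 0%N isT; have h1 := hin 1%N isT; have h2 := hin 2%N isT.
  have a01 := ad 0%N isT; have a12 := ad 1%N isT.
  move: hq => /=; rewrite catA catA => hq.
  have /sqfP := Btriple HB a01 a12 h0 h1 h2; apply; exists i, L.
  rewrite catA; apply: (hassq_pre hq).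
  rewrite !size_cat (Bsize HB h0) (Bsize HB h1) (Bsize HB h2); lia.
Qed.


Lemma Lmult i L : (i < n)%N -> hassq (flatten Xs) i L -> (3 * n < i + 2 * L)%N ->
  (L %% n = 0)%N.
Proof.
move=> inn [L0 hi hk] h3; rewrite sizeW in hi.
have n0 := npos HB.
case: (leqP (2 * n) (i + L)) => h2.
- have m1 : (1 < size w)%N by apply: (@blk_lt n _ _ 0%N); lia.
  have hX := Hin m1.
  have hs := @sync _ _ (n + L) hX; rewrite -(modnDl L n); apply: hs; first lia.
  move=> e en; have := nthW m1 en; rewrite mul1n => <-.
  have := hk (n + e - i)%N ltac:(lia).
  have -> : (i + (n + e - i) = n + e)%N by lia.
  by have -> : (i + L + (n + e - i) = n + L + e)%N by lia.
- have m2 : (2 < size w)%N by apply: (@blk_lt n _ _ 0%N); lia.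
  have hX := Hin m2.
  have := @sync _ _ (2 * n - L) hX.
  have e1 : (L = 2 * n - (2 * n - L))%N by lia.
  move=> hs; apply/eqP; rewrite -/(dvdn n L) e1 dvdn_sub ?dvdn_mull //.
  apply/eqP/hs; first lia.
  move=> e en; rewrite -nthW //.
  have := hk (2 * n + e - i - L)%N ltac:(lia).
  have -> : (i + (2 * n + e - i - L) = 2 * n - L + e)%N by lia.
  by have -> : (i + L + (2 * n + e - i - L) = 2 * n + e)%N by lia.
Qed.


Lemma main0 i L : (i < n)%N -> hassq (flatten Xs) i L -> False.
Proof.
move=> inn hq.
case: (leqP (i + 2 * L) (3 * n)) => h3; first exact: (caseA hq h3).
have Lm := Lmult inn hq h3.
have n0 := npos HB.
set t := (L %/ n)%N.
have Lt : L = (t * n)%N by rewrite {1}(divn_eq L n) Lm addn0.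
case: hq => L0 hi hk; rewrite sizeW in hi.
have t0 : (0 < t)%N by move: L0; rewrite Lt muln_gt0 => /andP[].
have blk : forall k e kk, (k + t < size w)%N -> (e < n)%N -> (kk < L)%N ->
    (i + kk = k * n + e)%N ->
    nth ord0 (nth [::] Xs k) e = nth ord0 (nth [::] Xs (k + t)) e.
  move=> k e kk kt en kL ie.
  rewrite -nthW //; last lia. rewrite -nthW // -ie hk //.
  congr nth; rewrite mulnDl -Lt; lia.
have eqblk : forall k, (k + t < size w)%N ->
    (forall e, (e < n)%N -> exists kk, (kk < L)%N /\ (i + kk = k * n + e)%N) ->
    nth ord0 w k = nth ord0 w (k + t).
  move=> k kt hex.
  have kw : (k < size w)%N by lia.
  have hk1 := Hin kw.
  have hk2 := Hin kt.
  apply: (Bdisj HB hk1); rewrite /inB.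
  suff -> : nth [::] Xs k = nth [::] Xs (k + t) by [].
  apply: (@eq_from_nth _ ord0); first by rewrite (Bsize HB hk1) (Bsize HB hk2).
  move=> e; rewrite (Bsize HB hk1) => en.
  have [kk [kL ie]] := hex e en; exact: (blk k e kk).
have tn : forall k, (k < t)%N -> (n <= k * n)%N -> (k * n < L)%N.
  by move=> k kt _; rewrite Lt; have := @lt_blk n k t 0 kt n0; rewrite addn0.
case: (posnP i) => [i0|ip].
-
  have /sqfP := Hw; apply; exists 0%N, t; split => //.
    have : (L + L <= size w * n)%N by lia.
    rewrite Lt -mulnDl leq_mul2r; case/orP; [lia|]; lia.
  move=> k kt; rewrite !add0n [(t + k)%N]addnC; apply: eqblk.
    apply: (@blk_lt n _ _ 0%N); rewrite addn0.
    apply: (@leq_trans ((t + t) * n)); last by rewrite mulnDl -Lt; lia.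
    by have := @lt_blk n (k + t) (t + t) 0 ltac:(lia) n0; rewrite addn0.
  move=> e en; exists (k * n + e)%N; split; last by rewrite i0.
  by rewrite Lt; apply: lt_blk.
- have t2 : (t + t < size w)%N.
    apply: (@blk_lt n _ _ 0%N); rewrite addn0 mulnDl -Lt; lia.
  have ha : forall k, (0 < k)%N -> (k < t)%N ->
      nth ord0 w k = nth ord0 w (k + t).
    move=> k k0 kt; apply: eqblk; first lia.
    have nk : (n <= k * n)%N by rewrite -{1}(mul1n n) leq_mul2r k0 orbT.
    move=> e en; exists (k * n + e - i)%N; split; last lia.
    have := @lt_blk n k t e kt en; rewrite -Lt; lia.
  have hb : forall e, (i <= e)%N -> (e < n)%N ->
      nth ord0 (nth [::] Xs 0) e = nth ord0 (nth [::] Xs t) e.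
    move=> e ie en; have := blk 0%N e (e - i)%N; rewrite add0n mul0n add0n.
    apply => //; lia.
  have hc : forall e, (e < i)%N ->
      nth ord0 (nth [::] Xs t) e = nth ord0 (nth [::] Xs (t + t)) e.
    move=> e ei; apply: (blk t e (t * n + e - i)%N) => //; lia.
  have /sqfP := Hw; apply.
  case: (eqVneq (nth ord0 w 0) (nth ord0 w t)) => [e0t|n0t].
    exists 0%N, t; split => //; first lia.
    move=> k kt; rewrite add0n; case: (posnP k) => [->|kp]; first by rewrite addn0.
    by rewrite addnC; apply: ha.
  case: (eqVneq (nth ord0 w t) (nth ord0 w (t + t))) => [ett|ntt].
    exists 1%N, t; split => //; first lia.
    move=> k kt; case: (ltnP (1 + k) t) => h1.
      by rewrite (ha (1 + k)%N) //; congr nth; lia.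
    have -> : (1 + k = t)%N by lia.
    by rewrite ett; congr nth; lia.
  exfalso.
  have w0 : (0 < size w)%N by lia.
  have wt : (t < size w)%N by lia.
  have h0 := Hin w0.
  have ht := Hin wt.
  have h2 := Hin t2.
  have /sqfP := Btriple HB n0t ntt h0 ht h2; apply; exists i, n; split => //.
    rewrite !size_cat (Bsize HB h0) (Bsize HB ht) (Bsize HB h2); lia.
  move=> k kn; rewrite !nth_cat (Bsize HB h0) (Bsize HB ht).
  case: (ltnP (i + k) n) => ikn.
    have -> : (i + n + k < n)%N = false by lia.
    have -> : (i + n + k - n < n)%N by lia.
    rewrite hb; [|lia|lia]; congr nth; lia.
  have -> : (i + n + k < n)%N = false by lia.
  have -> : (i + n + k - n < n)%N = false by lia.
  have -> : (i + k - n < n)%N by lia.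
  rewrite hc; [|lia]; congr nth; lia.
Qed.

End Main.

Lemma main_sqf n B (HB : brinkhuis_triple_pair n B) (w : word) (Xs : seq word) :
  size Xs = size w ->
  (forall j, (j < size w)%N -> inB B (nth ord0 w j) (nth [::] Xs j)) ->
  squarefree w -> squarefree (flatten Xs).
Proof.
move=> Hs Hin Hw; apply/sqfP => -[i [L hq]].
have n0 := npos HB.
set j := (i %/ n)%N.
have ie := divn_eq i n; rewrite -/j in ie.
have rn : (i %% n < n)%N by rewrite ltn_mod.
have hq0 := hq; case: hq0 => L0 hi _; rewrite (sizeW HB Hs Hin) in hi.
have jm : (j < size w)%N by apply: (@blk_lt n _ _ (i %% n)); lia.
have hsz : forall k, (k < size (take j Xs))%N -> size (nth [::] (take j Xs) k) = n.
  move=> k; rewrite size_takel ?Hs; last lia.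
  move=> kj; rewrite nth_take //; apply: (Xsz HB Hs Hin); lia.
have stj : size (take j Xs) = j by rewrite size_takel // Hs; lia.
move: hq; rewrite -(cat_take_drop j Xs) flatten_cat => hq.
have := hassq_suf hq; rewrite (size_flat hsz) stj => /(_ ltac:(lia)) hq'.
apply: (main0 (n := n) (B := B) (w := drop j w) (Xs := drop j Xs) HB _ _ _ _ hq').
- by rewrite !size_drop Hs.
- move=> k; rewrite size_drop => kl; rewrite !nth_drop; apply: Hin; lia.
- by apply: (@sqf_suf (take j w)); rewrite cat_take_drop.
- lia.
Qed.

Definition pickB (B : 'I_3 -> word * word) (x : 'I_3 * bool) : word :=
  if x.2 then (B x.1).1 else (B x.1).2.

Definition img B (w : word) (c : seq bool) : word :=
  flatten [seq pickB B x | x <- zip w c].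

Lemma pickB_in B x : inB B x.1 (pickB B x).
Proof. by rewrite /pickB /inB; case: x.2; [left|right]. Qed.

Lemma pickB_inj n B : brinkhuis_triple_pair n B -> injective (pickB B).
Proof.
move=> HB [a b] [a' b'] e.
have ea : a = a' by apply: (Bdisj HB (pickB_in B (a, b))); rewrite e; apply: (pickB_in B (a', b')).
subst a'; congr pair.
have [h _] := HB; have [_ [_ [_ [_ ne]]]] := h a.
move: e; rewrite /pickB /=.
by case: b; case: b' => // e; exfalso; apply: ne; rewrite e.
Qed.

Lemma img_sqf n B (HB : brinkhuis_triple_pair n B) (w : word) (c : seq bool) :
  size c = size w -> squarefree w -> squarefree (img B w c).
Proof.
move=> sc sw; apply: (main_sqf HB _ _ sw).
  by rewrite size_map size_zip sc minnn.
move=> j jw; rewrite (nth_map (ord0, false)); last by rewrite size_zip sc minnn.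
by rewrite nth_zip //; apply: (pickB_in B (nth ord0 w j, nth false c j)).
Qed.

Lemma flat_inj n (Xs Ys : seq word) :
  (forall X, X \in Xs -> size X = n) -> (forall X, X \in Ys -> size X = n) ->
  size Xs = size Ys -> flatten Xs = flatten Ys -> Xs = Ys.
Proof.
elim: Xs Ys => [|X Xs IH] [|Y Ys] //= hX hY [] sz e.
have sX : size X = n by apply: hX; rewrite mem_head.
have sY : size Y = n by apply: hY; rewrite mem_head.
move/eqP: e; rewrite eqseq_cat ?sX ?sY // => /andP[/eqP -> /eqP e].
congr cons; apply: IH => // Z hZ; [apply: hX | apply: hY]; by rewrite in_cons hZ orbT.
Qed.

Lemma size_img n B (HB : brinkhuis_triple_pair n B) (w : word) (c : seq bool) :
  size c = size w -> size (img B w c) = (size w * n)%N.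
Proof.
move=> sc; rewrite /img (size_flat (n := n)).
  by rewrite size_map size_zip sc minnn.
move=> j; rewrite size_map => jl; rewrite (nth_map (ord0, false)) //.
exact: (Bsize HB (pickB_in B _)).
Qed.

Lemma img_inj n B (HB : brinkhuis_triple_pair n B) (w w' : word) (c c' : seq bool) :
  size c = size w -> size c' = size w' -> size w = size w' ->
  img B w c = img B w' c' -> w = w' /\ c = c'.
Proof.
move=> sc sc' sw e.
have hs : forall s, forall X, X \in [seq pickB B x | x <- s] -> size X = n.
  by move=> s X /mapP [x _ ->]; apply: (Bsize HB (pickB_in B x)).
have := flat_inj (hs _) (hs _) _ e.
rewrite !size_map !size_zip sc sc' !minnn => /(_ sw) /(inj_map (pickB_inj HB)) ez.
split.
  by rewrite -(@unzip1_zip _ _ w c) ?sc // ez unzip1_zip ?sc'.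
by rewrite -(@unzip2_zip _ _ w c) ?sc // ez unzip2_zip ?sc'.
Qed.

Lemma count_step n B (HB : brinkhuis_triple_pair n B) m :
  (2 ^ m * sqfree_count m <= sqfree_count (m * n))%N.
Proof.
pose S := [set t : m.-tuple 'I_3 | `[< squarefree (tval t) >]].
pose F := fun p : m.-tuple 'I_3 * m.-tuple bool =>
  insubd (nseq_tuple (m * n) (ord0 : 'I_3)) (img B (tval p.1) (tval p.2)).
have valF : forall p, val (F p) = img B (tval p.1) (tval p.2).
  move=> p; rewrite /F val_insubd (size_img HB) ?size_tuple ?eqxx //.
rewrite /sqfree_count -/S.
have -> : (2 ^ m * #|S| = #|F @: finset.setX S [set: m.-tuple bool]|)%N.
  rewrite card_in_imset; first by rewrite cardsX cardsT card_tuple card_bool mulnC.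
  move=> [w c] [w' c'] _ _ /(congr1 val); rewrite !valF /= => e.
  have [ew ec] := img_inj HB (etrans (size_tuple c) (esym (size_tuple w)))
    (etrans (size_tuple c') (esym (size_tuple w')))
    (etrans (size_tuple w) (esym (size_tuple w'))) e.
  by congr pair; apply: val_inj.
apply: subset_leq_card; apply/fintype.subsetP => x /imsetP [[w c] hwc ->].
rewrite inE; apply/asboolP; rewrite valF /=; apply: (img_sqf HB).
  by rewrite !size_tuple.
by move: hwc; rewrite finset.in_setX inE => /andP [/asboolP h _].
Qed.

Lemma n_ge2 n B (HB : brinkhuis_triple_pair n B) : (1 < n)%N.
Proof.
have n0 := npos HB.
case: (ltnP 1 n) => // n1; have en : n = 1%N by lia.
pose g := fun x : 'I_3 * bool => nth ord0 (pickB B x) 0.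
have eg : forall x, pickB B x = [:: g x].
  move=> x; rewrite /g; have := Bsize HB (pickB_in B x); rewrite en.
  by case: (pickB B x) => [|y [|]].
have ginj : injective g.
  move=> x y e; apply: (pickB_inj HB); by rewrite !eg e.
have := leq_card g ginj; rewrite card_prod card_ord card_bool.
by [].
Qed.

Lemma sqf_single (x : 'I_3) : squarefree [:: x].
Proof. by apply/sqfP => -[i [L [L0 hi _]]]; move: hi => /=; lia. Qed.

Lemma count_prefix k k' : (0 < sqfree_count k)%N -> (k' <= k)%N ->
  (0 < sqfree_count k')%N.
Proof.
rewrite /sqfree_count !card_gt0 => /set0Pn [t]; rewrite inE => /asboolP ht kk.
apply/set0Pn; exists (insubd (nseq_tuple k' (ord0 : 'I_3)) (take k' t)).
rewrite inE; apply/asboolP; rewrite val_insubd size_takel ?size_tuple // eqxx.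
by apply: (@sqf_pre _ (drop k' t)); rewrite cat_take_drop.
Qed.

Lemma count_pos n B (HB : brinkhuis_triple_pair n B) m : (0 < sqfree_count m)%N.
Proof.
have n2 := n_ge2 HB.
have hp : forall j, (0 < sqfree_count (n ^ j))%N.
  elim => [|j IH].
    rewrite expn0 /sqfree_count card_gt0; apply/set0Pn.
    by exists [tuple of [:: (ord0 : 'I_3)]]; rewrite inE; apply/asboolP; apply: sqf_single.
  have := count_step HB (n ^ j); rewrite -expnSr.
  move=> h; apply: (leq_trans _ h); rewrite muln_gt0 IH expn_gt0 /=; done.
apply: (count_prefix (hp m)); exact: ltnW (ltn_expl m n2).
Qed.

Unset Implicit Arguments. Set Strict Implicit.
Local Open Scope classical_set_scope.
Local Open Scope ring_scope.

Lemma analysis_part (R : realType) (n : nat) (s : R) (a : nat -> nat) :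
  (1 < n)%N -> (forall m, 0 < a m)%N -> (forall m, 2 ^ m * a m <= a (m * n))%N ->
  (fun m : nat => (a m)%:R `^ (m%:R^-1)) @ \oo --> s ->
  2 `^ (((n - 1)%N)%:R^-1) <= s.
Proof.
move=> n1 apos astep hu.
set u := (fun m : nat => (a m)%:R `^ (m%:R^-1) : R) in hu.
have n0 : (n%:R : R) != 0 by rewrite pnatr_eq0; lia.
have key : forall m, (0 < m)%N -> 2 * u m <= u (m * n)%N ^+ n.
  move=> m m0.
  have m0R : (m%:R : R) != 0 by rewrite pnatr_eq0; lia.
  rewrite /u -powR_mulrn ?powR_ge0 // -powRrM.
  have -> : ((m * n)%N%:R^-1 * n%:R = (m%:R^-1 : R)).
    by rewrite natrM invfM -mulrA mulVf // mulr1.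
  have -> : (2 : R) = (2 ^+ m) `^ (m%:R^-1).
    by rewrite -powR_mulrn // -powRrM mulfV // powRr1.
  rewrite -powRM ?exprn_ge0 //.
  apply: ge0_ler_powR; rewrite ?invr_ge0 ?nnegrE ?mulr_ge0 ?exprn_ge0 //.
  by rewrite -natrX -natrM ler_nat.
have hv : (fun m => u (m * n)%N) @ \oo --> s.
  apply: (cvg_comp (fun m => (m * n)%N) u _ hu).
  apply/cvgnyPge => A; exists A => // x /= hx.
  by apply: (leq_trans hx); rewrite leq_pmulr //; lia.
have hvn : (fun m => u (m * n)%N ^+ n) @ \oo --> s ^+ n.
  apply: (@cvg_comp _ _ _ (fun m => u (m * n)%N) (fun x : R => x ^+ n) _ _ _ hv); exact: exprn_continuous.
have h2 : (fun m => 2 * u m) @ \oo --> 2 * s.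
  by apply: cvgM => //; apply: cvg_cst.
have le1 : 2 * s <= s ^+ n.
  apply: (ler_cvg_to h2 hvn); exists 1%N => // m /= m1; apply: key; lia.
have s1 : 1 <= s.
  apply: (@ler_cvg_to _ _ _ _ (fun _ : nat => (1:R)) u 1 s (cvg_cst _) hu); exists 1%N => // m /= m1.
  rewrite /u; apply: (@le_trans _ _ ((1 : R) `^ (m%:R^-1))); first by rewrite powR1.
  apply: ge0_ler_powR; rewrite ?invr_ge0 ?nnegrE //.
  by rewrite ler1n apos.
have s0 : 0 < s by apply: lt_le_trans s1.
have en : n = (n - 1).+1%N by lia.
have le2 : 2 <= s ^+ (n - 1).
  have e2 : s ^+ n = s ^+ (n - 1) * s by rewrite -exprSr; congr (_ ^+ _); lia.
  by move: le1; rewrite e2 ler_pM2r.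
set k := ((n - 1)%N%:R : R).
have k0 : k != 0 by rewrite pnatr_eq0; lia.
have -> : s = (s ^+ (n - 1)) `^ k^-1.
  by rewrite -powR_mulrn ?ltW // -powRrM mulfV // powRr1 // ltW.
apply: ge0_ler_powR => //; rewrite ?invr_ge0 ?nnegrE ?exprn_ge0 ?ler0n //.
exact: ltW.
Qed.

(* s is the limit of a(m)^(1/m); we quantify over any s that is this limit. *)
Theorem lemma1 (R : realType) (n : nat) (s : R) :
  (exists B : 'I_3 -> word * word, brinkhuis_triple_pair n B) ->
  (fun m : nat => (sqfree_count m)%:R `^ (m%:R^-1)) @ \oo --> s ->
  2 `^ (((n - 1)%N)%:R^-1) <= s.
Proof.
move=> [B HB] hu.
exact: (@analysis_part R n s sqfree_count (n_ge2 HB) (count_pos HB) (count_step HB) hu).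
Qed.
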